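(* Let $b>1$ be an integer and let $\mu,\sigma$ be the digit mean and digit standard deviation of some generalized $b$-happy function $H$. Let $n$ be a positive integer satisfying bound (B): (B1) $4\left(1+3\mu+\sqrt{2}\,\sigma\, b^{5n/8}\right)\le b^{n-1}$, (B2) $\sqrt{3\mu b}\,\sigma\le b^{3n/8}$, (B3) $4\mu\left(3\mu+1+b^{3n/4}+2\sigma\mu^{-1/2}b^{5n/8}\right)\le b^{n-1}$. Let $\lambda=b^{n/8}$, let $a\in[b^{n-1},b^n]$, and define $f(x)=1+\frac34\mu x+\lambda\sigma\sqrt{\frac34 x}$ for $x\ge0$. Then there exists an integer $n_2$ such that - $\frac{b^{n-1}}{\mu}\le n_2\le\frac{4}{3\mu}b^n$, - $4\mid n_2$, - $0\le a-f(n_2)\le 3\mu+1$.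
   Context: A generalized $b$-happy function: fix an integer $b>1$ and non-negative integers $h(0),\dots,h(b-1)$ with $h(0)=0$, $h(1)=1$; for $n=\sum_{i=0}^k a_ib^i$ in base $b$, $H(n)=\sum_{i=0}^k h(a_i)$. Its digit mean is $\mu=\frac1b\sum_{j=0}^{b-1}h(j)$ and its digit variance is $\sigma^2=\frac1b\sum_{j=0}^{b-1}(h(j)-\mu)^2$, with $\sigma\ge0$. *)

(* Defs.v *)
From Stdlib Require Import Reals Lra Lia ZArith.
Open Scope R_scope.

(* A generalized b-happy function is determined by digit values
   h(0..b-1) : nat with h 0 = 0, h 1 = 1 (values of h at j >= b are irrelevant). *)
Definition happy_digits (b : nat) (h : nat -> nat) : Prop :=
  (1 < b)%nat /\ h 0%nat = 0%nat /\ h 1%nat = 1%nat.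

Fixpoint happyH_aux (fuel : nat) (b : nat) (h : nat -> nat) (n : nat) : nat :=
  match fuel with
  | O => O
  | S k => match n with
           | O => O
           | _ => (h (n mod b) + happyH_aux k b h (n / b))%nat
           end
  end.
Definition happyH (b : nat) (h : nat -> nat) (n : nat) : nat := happyH_aux (S n) b h n.

Definition digit_mean (b : nat) (h : nat -> nat) : R :=
  (/ INR b) * sum_f_R0 (fun j => INR (h j)) (b - 1).

Definition digit_var (b : nat) (h : nat -> nat) : R :=
  (/ INR b) * sum_f_R0 (fun j => (INR (h j) - digit_mean b h) ^ 2) (b - 1).

Definition digit_sd (b : nat) (h : nat -> nat) : R := sqrt (digit_var b h).

(* Main.v *)
Require Import Defs.
From Stdlib Require Import Reals ZArith Lra Lia Psatz.
Open Scope R_scope.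

Lemma step_lem (t x : R) : 0 <= t -> 3*t*t <= x ->
  t * (sqrt (3/4*(x+4)) - sqrt (3/4*x)) <= 1.
Proof.
  intros Ht Hx.
  assert (Hx0 : 0 <= x) by nra.
  assert (E0 : sqrt (3/4*x) * sqrt (3/4*x) = 3/4*x) by (apply sqrt_sqrt; lra).
  assert (E1 : sqrt (3/4*(x+4)) * sqrt (3/4*(x+4)) = 3/4*(x+4)) by (apply sqrt_sqrt; lra).
  assert (P0 : 0 <= sqrt (3/4*x)) by apply sqrt_pos.
  assert (P1 : 0 < sqrt (3/4*(x+4))) by (apply sqrt_lt_R0; lra).
  set (s0 := sqrt (3/4*x)) in *. set (s1 := sqrt (3/4*(x+4))) in *.
  assert (G0 : 3*t/2 <= s0) by nra.
  assert (K : t*(s1-s0)*(s1+s0) = 3*t) by nra.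
  assert (G1 : s0 <= s1) by nra.
  assert (Hp : 0 < s1 + s0) by lra.
  replace (t*(s1-s0)) with (3*t/(s1+s0)) by (field_simplify; [|lra]; rewrite <- K; field; lra).
  apply (Rmult_le_reg_r (s1+s0)); [lra|]. unfold Rdiv.
  rewrite Rmult_assoc, Rinv_l by lra. lra.
Qed.

Lemma last_true (P : nat -> Prop) : (forall k, P k \/ ~P k) -> P 0%nat ->
  forall M, ~ P M -> exists k, P k /\ ~ P (S k).
Proof.
  intros D P0 M. induction M as [|M IH]; intros HM.
  - contradiction.
  - destruct (D M) as [HP|HP].
    + exists M; auto.
    + auto.
Qed.

Lemma sum_ge1 (g : nat -> R) m : (forall j, 0 <= g j) -> g 1%nat <= sum_f_R0 g (S m).
Proof.
  intros Hg. induction m as [|m IH].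
  - simpl. specialize (Hg 0%nat). lra.
  - rewrite tech5. specialize (Hg (S (S m))). lra.
Qed.

Theorem lemma6p2 (b : nat) (h : nat -> nat) (n : nat) (a : R) :
  happy_digits b h ->
  (0 < n)%nat ->
  let mu := digit_mean b h in
  let sigma := digit_sd b h in
  let B := INR b in
  (* (B1) *)
  4 * (1 + 3 * mu + sqrt 2 * sigma * Rpower B (5 * INR n / 8)) <= B ^ (n - 1) ->
  (* (B2) *)
  sqrt (3 * mu * B) * sigma <= Rpower B (3 * INR n / 8) ->
  (* (B3) *)
  4 * mu * (3 * mu + 1 + Rpower B (3 * INR n / 4)
            + 2 * sigma * Rpower mu (- (1 / 2)) * Rpower B (5 * INR n / 8))
    <= B ^ (n - 1) ->
  B ^ (n - 1) <= a <= B ^ n ->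
  let lambda := Rpower B (INR n / 8) in
  let f := fun x : R => 1 + 3 / 4 * mu * x + lambda * sigma * sqrt (3 / 4 * x) in
  exists n2 : Z,
    B ^ (n - 1) / mu <= IZR n2 <= 4 / (3 * mu) * B ^ n /\
    (4 | n2)%Z /\
    0 <= a - f (IZR n2) <= 3 * mu + 1.
Proof.
  intros [Hb [H0 H1]] Hn mu sigma B HB1 HB2 _ Ha lambda f.
  assert (HB : 2 <= B) by (unfold B; replace 2 with (INR 2) by (simpl; lra); apply le_INR; lia).
  assert (Hmu : 1 <= mu * B).
  { unfold mu, B, digit_mean.
    destruct b as [|b']; [lia|]. replace (S b' - 1)%nat with (S (b' - 1)) by lia.
    pose proof (sum_ge1 (fun j => INR (h j)) (b' - 1) (fun j => pos_INR _)) as S1.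
    cbv beta in S1. rewrite H1 in S1. change (INR 1) with 1 in S1.
    assert (0 < INR (S b')) by (apply lt_0_INR; lia).
    set (SS := sum_f_R0 _ _) in *.
    replace (/ INR (S b') * SS * INR (S b')) with SS by (field; lra). lra. }
  assert (Hmupos : 0 < mu) by nra.
  assert (Hsig : 0 <= sigma) by apply sqrt_pos.
  assert (Hlam : 0 < lambda) by (unfold lambda, Rpower; apply exp_pos).
  assert (HBn : B ^ n = B * B ^ (n - 1)).
  { destruct n; [lia|]. simpl. replace (n - 0)%nat with n by lia. reflexivity. }
  assert (HP : 0 < B ^ (n - 1)) by (apply pow_lt; lra).
  assert (RB : forall y z, Rpower B (y + z) = Rpower B y * Rpower B z) by (intros; apply Rpower_plus).
  assert (RBn : Rpower B (INR n) = B ^ n) by (apply Rpower_pow; lra).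
  set (R8 := Rpower B (INR n / 8)) in *.
  assert (E38 : Rpower B (3 * INR n / 8) = R8 * R8 * R8).
  { unfold R8. rewrite <- !RB. f_equal. lra. }
  assert (E58 : Rpower B (5 * INR n / 8) = R8 * R8 * R8 * R8 * R8).
  { unfold R8. rewrite <- !RB. f_equal. lra. }
  assert (E88 : B ^ n = R8*R8*R8*R8*R8*R8*R8*R8).
  { rewrite <- RBn. unfold R8. rewrite <- !RB. f_equal. lra. }
  rewrite E38 in HB2. rewrite E58 in HB1.
  unfold lambda in f. fold R8 in f.
  assert (HR8 : 0 < R8) by (unfold R8, Rpower; apply exp_pos).
  assert (Key : 3 * (R8*sigma) * (R8*sigma) * mu <= B ^ (n-1)).
  { assert (Hs : sqrt (3*mu*B) * sqrt (3*mu*B) = 3*mu*B) by (apply sqrt_sqrt; nra).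
    pose proof (sqrt_pos (3*mu*B)).
    assert (Q0 : 0 <= sqrt (3*mu*B) * sigma) by nra.
    assert (Q : 3*mu*B*sigma*sigma <= (R8*R8*R8)*(R8*R8*R8)).
    { replace (3*mu*B*sigma*sigma) with ((sqrt (3*mu*B) * sigma)*(sqrt (3*mu*B) * sigma)) by (transitivity ((sqrt (3*mu*B) * sqrt (3*mu*B))*sigma*sigma); [ring | rewrite Hs; ring]).
      apply Rmult_le_compat; lra. }
    assert (Q2 : B * (3 * (R8*sigma) * (R8*sigma) * mu) <= B * B^(n-1)).
    { rewrite <- HBn, E88. nra. }
    nra. }
  set (r0 := B ^ (n-1) / (4*mu)).
  destruct (archimed r0) as [A1 A2].
  set (z0 := up r0) in *.
  set (x0 := 4 * IZR z0).
  assert (Hr0 : 4 * mu * r0 = B^(n-1)) by (unfold r0; field; lra).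
  assert (Hx0lo : B^(n-1) <= mu * x0) by (unfold x0; nra).
  assert (Hx0hi : mu * x0 <= B^(n-1) + 4*mu) by (unfold x0; nra).
  assert (HBn1 : 4 <= B^(n-1)).
  { assert (0 <= sqrt 2 * sigma * (R8*R8*R8*R8*R8)).
    { assert (0 < R8) by (unfold R8, Rpower; apply exp_pos).
      pose proof (sqrt_pos 2). apply Rmult_le_pos; [apply Rmult_le_pos|]; try lra.
      repeat apply Rmult_le_pos; lra. }
    nra. }
  assert (Fx0 : f x0 <= a).
  { unfold f.
    assert (Sq : sqrt (3/4*x0) <= sqrt 2 * (R8*R8*R8*R8)).
    { assert (E : sqrt 2 * (R8*R8*R8*R8) = sqrt (2 * ((R8*R8*R8*R8)*(R8*R8*R8*R8)))).
      { rewrite sqrt_mult by nra. rewrite sqrt_square by nra. reflexivity. }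
      rewrite E. apply sqrt_le_1_alt.
      assert (x0 <= B^n + 4).
      { rewrite HBn. assert (mu * x0 <= mu * (B * B^(n-1) + 4)) by nra. nra. }
      nra. }
    assert (R8*sigma*sqrt (3/4*x0) <= sqrt 2 * sigma * (R8*R8*R8*R8*R8)).
    { assert (0 <= R8*sigma) by nra. nra. }
    nra. }
  set (r1 := a / (3*mu)).
  destruct (archimed r1) as [A3 _].
  assert (Hr1 : 3*mu*r1 = a) by (unfold r1; field; lra).
  assert (Hr1p : 0 < r1) by nra.
  set (M := Z.to_nat (up r1)).
  assert (HM : INR M = IZR (up r1)).
  { unfold M. rewrite INR_IZR_INZ. rewrite Z2Nat.id; [reflexivity|].
    apply le_IZR. lra. }
  set (P := fun k : nat => f (x0 + 4 * INR k) <= a).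
  assert (Hx0pos : 0 < x0) by nra.
  assert (fge : forall x, 0 <= x -> 1 + 3/4*mu*x <= f x).
  { intros x Hx. unfold f. pose proof (sqrt_pos (3/4*x)).
    assert (0 <= R8*sigma) by nra. nra. }
  assert (PM : ~ P M).
  { unfold P. intros C. pose proof (pos_INR M).
    pose proof (fge (x0 + 4 * INR M) ltac:(lra)). nra. }
  destruct (last_true P (fun k => match Rle_dec (f (x0 + 4 * INR k)) a with
                                  | left p => or_introl p | right p => or_intror p end)
             ltac:(unfold P; simpl; replace (x0 + 4*0) with x0 by ring; exact Fx0) M PM)
    as [k [Pk Pk1]].
  unfold P in Pk, Pk1. rewrite S_INR in Pk1.
  exists (4 * (z0 + Z.of_nat k))%Z.
  assert (EZ : IZR (4 * (z0 + Z.of_nat k)) = x0 + 4 * INR k).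
  { unfold x0. rewrite mult_IZR, plus_IZR, <- INR_IZR_INZ. ring. }
  rewrite EZ. pose proof (pos_INR k).
  set (x := x0 + 4 * INR k) in *.
  assert (Hxlo : B^(n-1) <= mu * x) by (unfold x; nra).
  split; [split|split].
  - apply (Rmult_le_reg_l mu); [lra|]. unfold Rdiv. 
    replace (mu * (B ^ (n - 1) * / mu)) with (B^(n-1)) by (field; lra). lra.
  - pose proof (fge x ltac:(unfold x; lra)).
    apply (Rmult_le_reg_l (3*mu)); [lra|].
    replace (3 * mu * (4 / (3 * mu) * B ^ n)) with (4 * B^n) by (field; lra). lra.
  - exists (z0 + Z.of_nat k)%Z. ring.
  - split; [lra|].
    assert (St : R8*sigma * (sqrt (3/4*(x+4)) - sqrt (3/4*x)) <= 1).
    { apply step_lem; [nra|].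
      assert (mu * (3 * (R8*sigma) * (R8*sigma)) <= mu * x) by nra.
      nra. }
    replace (x0 + 4 * (INR k + 1)) with (x + 4) in Pk1 by (unfold x; ring).
    unfold f in *. nra.
Qed.
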